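(* Fix $\nu\ge1$ and let $\{a_{ij}\},\{b_{jk}\},\{c_{ik}\}\in\mathcal B$ (notation in the context). Let $\{t_{ijk}\}\in\mathcal T(\{a_{ij}\},\{b_{jk}\},\{c_{ik}\})$, with $t^*_{jjj}$ as defined in the context. Then: (a) $a^*_{jj}+b^*_{jj}-t^*_{jjj}\ge 0$ for every $j$; (b) if $a^*_{jj}+b^*_{jj}-t^*_{jjj}=0$ for all $j$, then $a_{ij}+b_{ij}=c_{ij}$ for all $i\ne j$.
   Context: $\mathcal B$ is the set of collections $\{a_{ij}\}$ of nonnegative integers indexed by pairs $i\ne j$ in $\{1,\dots,\nu\}$ such that $\sum_{i:i\ne j}a_{ij}=\sum_{i:i\ne j}a_{ji}$ for every $j$; for such a collection put $a^*_{jj}:=\sum_{i:i\ne j}a_{ji}=\sum_{i:i\ne j}a_{ij}$ (similarly $b^*_{jj}$, $c^*_{jj}$). For $\{a_{ij}\},\{b_{jk}\},\{c_{ik}\}\in\mathcal B$, $\mathcal T(\{a_{ij}\},\{b_{jk}\},\{c_{ik}\})$ is the set of collections $\{t_{ijk}\}$ of nonnegative integers indexed by triples $(i,j,k)\in\{1,\dots,\nu\}^3$ not of the form $(j,j,j)$, such that $\sum_i t_{ijk}=b_{jk}$ for $j\ne k$; $\sum_j t_{ijk}=c_{ik}$ for $i\ne k$; $\sum_k t_{ijk}=a_{ij}$ for $i\ne j$; and for every $j$, $$a^*_{jj}+\sum_{k:k\ne j}t_{jjk}=b^*_{jj}+\sum_{i:i\ne j}t_{ijj}=c^*_{jj}+\sum_{m:m\ne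 j}t_{jmj};$$ this common value is denoted $t^*_{jjj}$. *)

(* Defs.v *)
From mathcomp Require Import all_boot all_order all_algebra.
Set Implicit Arguments. Unset Strict Implicit. Unset Printing Implicit Defensive.

(* Indices 1..nu are represented by 'I_nu.  A collection {a_ij}_{i<>j} is a
   function 'I_nu -> 'I_nu -> nat whose diagonal values are irrelevant (never
   used); similarly {t_ijk} is a function on triples whose values at (j,j,j)
   are never used. *)

Definition inB (nu : nat) (a : 'I_nu -> 'I_nu -> nat) : Prop :=
  forall j : 'I_nu, \sum_(i | i != j) a i j = \sum_(i | i != j) a j i.

Definition star (nu : nat) (a : 'I_nu -> 'I_nu -> nat) (j : 'I_nu) : nat :=
  \sum_(i | i != j) a j i.

Definition inT (nu : nat) (a b c : 'I_nu -> 'I_nu -> nat)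
  (t : 'I_nu -> 'I_nu -> 'I_nu -> nat) : Prop :=
  [/\ (forall j k : 'I_nu, j != k -> \sum_i t i j k = b j k),
      (forall i k : 'I_nu, i != k -> \sum_j t i j k = c i k),
      (forall i j : 'I_nu, i != j -> \sum_k t i j k = a i j) &
      (forall j : 'I_nu,
         star a j + \sum_(k | k != j) t j j k = star b j + \sum_(i | i != j) t i j j /\
         star b j + \sum_(i | i != j) t i j j = star c j + \sum_(m | m != j) t j m j)].

(* t^*_{jjj} := the common value, i.e. a^*_{jj} + sum_{k<>j} t_{jjk} *)
Definition tstar (nu : nat) (a : 'I_nu -> 'I_nu -> nat)
  (t : 'I_nu -> 'I_nu -> 'I_nu -> nat) (j : 'I_nu) : nat :=
  star a j + \sum_(k | k != j) t j j k.

(* Main.v *)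
Require Import Defs.
From mathcomp Require Import all_boot all_order all_algebra.
From mathcomp Require Import zify.
Import Order.TTheory GRing.Theory Num.Theory.
Local Open Scope ring_scope.

Theorem lemma3 (nu : nat) (hnu : (1 <= nu)%N)
  (a b c : 'I_nu -> 'I_nu -> nat) (t : 'I_nu -> 'I_nu -> 'I_nu -> nat) :
  inB a -> inB b -> inB c -> inT a b c t ->
  (forall j : 'I_nu,
     0 <= (star a j)%:Z + (star b j)%:Z - (tstar a t j)%:Z) /\
  ((forall j : 'I_nu,
      (star a j)%:Z + (star b j)%:Z - (tstar a t j)%:Z = 0) ->
   forall i j : 'I_nu, i != j -> (a i j + b i j)%N = c i j).
Proof.
move=> _ _ _ [Tb Tc Ta _].
pose S j := (\sum_(k | k != j) \sum_(i | i != j) t i j k)%N.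
have Hb j : star b j = (\sum_(k | k != j) t j j k + S j)%N.
  rewrite /star /S -big_split; apply: eq_bigr => k kj.
  rewrite -Tb; last by rewrite eq_sym.
  by rewrite (bigD1 j) //=.
have E j : (star a j)%:Z + (star b j)%:Z - (tstar a t j)%:Z = (S j)%:Z.
  rewrite /tstar Hb !PoszD; lia.
split=> [j|H]; first by rewrite E.
have Z i j k : k != j -> i != j -> t i j k = 0%N.
  move=> kj ij; have := H j; rewrite E => /eqP; rewrite eqz_nat => /eqP S0.
  have : (t i j k <= S j)%N.
    rewrite /S (bigD1 k) //= (bigD1 i) //=. rewrite -addnA. exact: leq_addr.
  by rewrite S0; case: (t i j k).
move=> i k ik.
rewrite -Ta // -Tb // -Tc //.
rewrite (bigD1 k) //= big1 ?addn0; last by move=> l lk; apply: Z => //; rewrite eq_sym.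
rewrite (bigD1 i) //= big1 ?addn0; last by move=> l li; apply: Z => //; rewrite eq_sym.
rewrite (bigD1 i) //= (bigD1 k) /=; last by rewrite eq_sym ik.
rewrite big1 ?addn0; first by rewrite addnC.
move=> j /andP [ji jk]; apply: Z; by rewrite eq_sym.
Qed.
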